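(* Let $S$ be a finite pseudo-nilpotent semigroup. If $I$ is an ideal of $S$ such that $\mathcal{N}_I$ has no edges, then every element of $I$ is an isolated vertex of $\mathcal{N}_S$.
   Context: For a semigroup $S$, $S^1$ denotes $S$ with an identity adjoined (if $S$ has none). For $x,y\in S$ and $z_1,z_2,\ldots\in S^1$ define recursively $\lambda_0=x$, $\rho_0=y$, $\lambda_{n+1}=\lambda_n z_{n+1}\rho_n$, $\rho_{n+1}=\rho_n z_{n+1}\lambda_n$; write $\lambda_n(x,y,z_1,\ldots,z_n)$ and $\rho_n(x,y,z_1,\ldots,z_n)$. A semigroup $S$ is nilpotent (in the sense of Mal'cev) if there is a positive integer $n$ with $\lambda_n(a,b,c_1,\ldots,c_n)=\rho_n(a,b,c_1,\ldots,c_n)$ for all $a,b\in S$ and $c_1,\ldots,c_n\in S^1$. $\langle X\rangle$ denotes the subsemigroup generated by $X$. The upper non-nilpotent graph $\mathcal{N}_S$ has vertex set $S$, with an edge between $x$ and $y$ iff $\langle x,y\rangle$ is not nilpotent. The empty set is regarded as an ideal; for an ideal $I$ of $S$, $S/I$ is the Rees factor semigroup, with $S/\emptyset=S$. A semigroup $S$ is pseudo-nilpotent if the following holds: whenever $x,y\in S$, $w_1,\ldots,w_m\in S^1$, $T$ is the subsemigroup generated by $x,y$ and those $w_i$ lying in $S$, $I$ is an ideal (possibly empty) of $T$, and $t<m$ are non-negative integers such that, writing $\lambda_k=\lambda_k(x,y,w_1,\ldots,w_k)$ and $\rho_k=\rho_k(x,y,w_1,\ldots,w_k)$, one has $\lambda_t\neq\rho_t$,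 $(\lambda_t,\rho_t)=(\lambda_m,\rho_m)$ and $\lambda_m,\rho_m\notin I$, then for every $0\le i\le m$ there is an edge in $\mathcal{N}_{T/I}$ between (the images of) $\lambda_i$ and $\rho_i$. *)

(* Defs.v *)
From mathcomp Require Import all_boot.
Set Implicit Arguments. Unset Strict Implicit. Unset Printing Implicit Defensive.

(* A semigroup is modelled by a carrier type with a binary operation
   (associativity is assumed explicitly where needed).  Subsemigroups and
   subsets are predicates on the carrier. *)

(* Product a z b where z ranges over S^1: None is the adjoined identity. *)
Definition mul1 {A : Type} (op : A -> A -> A) (a : A) (z : option A) (b : A) : A :=
  match z with Some c => op (op a c) b | None => op a b end.

(* lamrho op x y z n = (lambda_n(x,y,z_1..z_n), rho_n(x,y,z_1..z_n));
   z k is z_k (indices from 1; z 0 unused). *)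
Fixpoint lamrho {A : Type} (op : A -> A -> A) (x y : A) (z : nat -> option A)
  (n : nat) : A * A :=
  match n with
  | 0 => (x, y)
  | n'.+1 => let p := lamrho op x y z n' in
             (mul1 op p.1 (z n) p.2, mul1 op p.2 (z n) p.1)
  end.

(* z is an element of P^1 (None = adjoined identity). *)
Definition in1 {A : Type} (P : A -> Prop) (z : option A) : Prop :=
  match z with Some c => P c | None => True end.

(* Mal'cev nilpotency of the semigroup with carrier P (closed under op). *)
Definition nilpotent {A : Type} (op : A -> A -> A) (P : A -> Prop) : Prop :=
  exists n, 0 < n /\
    forall (a b : A) (z : nat -> option A), P a -> P b ->
      (forall i, in1 P (z i)) ->
      (lamrho op a b z n).1 = (lamrho op a b z n).2.

Inductive gen {A : Type} (op : A -> A -> A) (X : A -> Prop) : A -> Prop :=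
  | gen_base a : X a -> gen op X a
  | gen_mul a b : gen op X a -> gen op X b -> gen op X (op a b).

Definition pair2 {A : Type} (x y : A) : A -> Prop := fun a => a = x \/ a = y.

(* Edge of the upper non-nilpotent graph: <x,y> is not nilpotent. *)
Definition nn_edge {A : Type} (op : A -> A -> A) (x y : A) : Prop :=
  ~ nilpotent op (gen op (pair2 x y)).

(* I is a (possibly empty) ideal of the semigroup with carrier P. *)
Definition is_ideal {T : finType} (op : T -> T -> T) (P : T -> Prop) (I : {set T}) : Prop :=
  (forall a, a \in I -> P a) /\
  (forall a s, a \in I -> P s -> op a s \in I /\ op s a \in I).

(* Rees factor by I: Some t represents t (t not in I), None represents the zero
   (the class I).  If I is empty, None never arises and this is a copy of the
   semigroup itself. *)
Definition reesop {T : finType} (op : T -> T -> T) (I : {set T})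
  (a b : option T) : option T :=
  match a, b with
  | Some a', Some b' => if op a' b' \in I then None else Some (op a' b')
  | _, _ => None
  end.

Definition rimg {T : finType} (I : {set T}) (t : T) : option T :=
  if t \in I then None else Some t.

Definition pseudo_nilpotent {T : finType} (op : T -> T -> T) : Prop :=
  forall (x y : T) (m : nat) (w : nat -> option T) (I : {set T}) (t : nat),
    let Tg := gen op (fun a => a = x \/ a = y \/ exists2 i, 0 < i <= m & w i = Some a) in
    let lr := lamrho op x y w in
    is_ideal op Tg I -> t < m ->
    (lr t).1 <> (lr t).2 -> lr t = lr m ->
    (lr m).1 \notin I -> (lr m).2 \notin I ->
    forall i, i <= m -> nn_edge (reesop op I) (rimg I (lr i).1) (rimg I (lr i).2).

(* Main.v *)
Require Import Defs.
From mathcomp Require Import all_boot.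
From Stdlib Require Import Classical.

Section Helpers.
Variables (T : finType) (op : T -> T -> T).

Lemma genR (u v : T) p :
  gen (reesop op set0) (pair2 (Some u) (Some v)) p ->
  exists2 g, p = Some g & gen op (pair2 u v) g.
Proof.
elim=> [a [->|->]|a b _ [g1 -> H1] _ [g2 -> H2]].
- by exists u => //; apply: gen_base; left.
- by exists v => //; apply: gen_base; right.
- exists (op g1 g2); first by rewrite /= in_set0.
  exact: gen_mul.
Qed.

Lemma nilp_rees (u v : T) : nilpotent op (gen op (pair2 u v)) ->
  nilpotent (reesop op set0) (gen (reesop op set0) (pair2 (Some u) (Some v))).
Proof.
case=> n [n0 Hn]; exists n; split=> // a' b' z Pa Pb Pz.
have [a -> Ga] := genR _ _ _ Pa; have [b -> Gb] := genR _ _ _ Pb.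
pose z' i := match z i with Some (Some c) => Some c | _ => None end.
have Pz' : forall i, in1 (gen op (pair2 u v)) (z' i).
  move=> i; rewrite /z'; have := Pz i; case: (z i) => [[c|]|] //=.
  by move/(genR _ _ _) => [g [->]].
have E : forall k, lamrho (reesop op set0) (Some a) (Some b) z k =
   (Some (lamrho op a b z' k).1, Some (lamrho op a b z' k).2).
  elim=> [//|k IH] /=; rewrite IH /=.
  have := Pz k.+1; rewrite /z'; case: (z k.+1) => [[c|]|] /=.
  + by move=> _; rewrite /reesop !in_set0.
  + by move/(genR _ _ _) => [g].
  + by move=> _; rewrite /reesop !in_set0.
by rewrite E (Hn a b z') .
Qed.

Lemma lr_stable x y z k d : (lamrho op x y z k).1 = (lamrho op x y z k).2 ->
  (lamrho op x y z (k + d)).1 = (lamrho op x y z (k + d)).2.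
Proof. by move=> H; elim: d => [|d IH]; rewrite ?addn0 // addnS /= IH. Qed.

End Helpers.

Theorem lemma2p7 (T : finType) (op : T -> T -> T) (Hassoc : associative op)
  (Hpn : pseudo_nilpotent op) (I : {set T}) (HI : is_ideal op (fun _ => True) I)
  (Hnoedge : forall x y : T, x \in I -> y \in I -> ~ nn_edge op x y) :
  forall x : T, x \in I -> forall y : T, ~ nn_edge op x y.
Proof.
move=> x xI y Hn.
have idl : forall a s, a \in I -> op a s \in I /\ op s a \in I.
  by move=> a s aI; apply: (HI.2 a s aI).
set G := gen op (pair2 x y).
set N := #|{: T * T}|.
have [a [b [z [Ga [Gb [Gz Hne]]]]]] : exists a b z, G a /\ G b /\
    (forall i, in1 G (z i)) /\
    (lamrho op a b z N.+1).1 <> (lamrho op a b z N.+1).2.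
  apply: NNPP => H; apply: Hn; exists N.+1; split=> // a b z Pa Pb Pz.
  by apply: NNPP => Hne; apply: H; exists a, b, z.
pose f (k : 'I_N.+1) := lamrho op a b z k.
have : ~~ injectiveb f.
  apply/negP => /injectiveP inj; have := @leq_card _ _ f inj.
  rewrite card_ord => H; suff: N < N by rewrite ltnn. exact: H.
move=> Hni; have [i0 [j0 nij Efij]] := elimT (@injectivePn _ _ f) Hni.
have [t [m [tm [mN Etm]]]] : exists t m, t < m /\ m <= N /\
    lamrho op a b z t = lamrho op a b z m.
  case: (ltngtP i0 j0) => [lt|lt|eq].
  - by exists i0, j0; split=> //; split; [rewrite -ltnS ltn_ord | exact: Efij].
  - by exists j0, i0; split=> //; split; [rewrite -ltnS ltn_ord | exact: (esym Efij)].
  - by move: nij; rewrite (val_inj eq) eqxx.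
have neq k : k <= N.+1 -> (lamrho op a b z k).1 <> (lamrho op a b z k).2.
  by move=> kN E; apply: Hne; rewrite -(subnKC kN); apply: lr_stable.
have Hedges := Hpn a b m z set0 t.
simpl in Hedges.
have Hid : is_ideal op (gen op (fun a0 => a0 = a \/ a0 = b \/ exists2 i, 0 < i <= m & z i = Some a0)) set0.
  by split=> [a0|a0 s]; rewrite in_set0.
have {}Hedges := Hedges Hid tm (neq t (leq_trans (ltnW tm) (leqW mN))) Etm.
rewrite !in_set0 in Hedges.
have {}Hedges := Hedges isT isT.
case: (boolP [|| a \in I, b \in I | (if z 1 is Some c then c \in I else false)]) => HC.
- have [l1 r1] : (lamrho op a b z 1).1 \in I /\ (lamrho op a b z 1).2 \in I.
    move: HC => /or3P [aI|bI|]; simpl.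
    + case: (z 1) => [c|] /=.
        by split; [exact: (idl _ b (idl _ c aI).1).1 | exact: (idl a (op b c) aI).2].
      by split; [exact: (idl _ b aI).1 | exact: (idl _ b aI).2].
    + case: (z 1) => [c|] /=.
        by split; [exact: (idl b _ bI).2 | exact: (idl _ a (idl b c bI).1).1].
      by split; [exact: (idl b a bI).2 | exact: (idl b a bI).1].
    + case: (z 1) => [c cI|//] /=.
      by split; [exact: (idl _ b (idl c a cI).2).1 | exact: (idl _ a (idl c b cI).2).1].
  have := Hedges 1 (leq_ltn_trans (leq0n t) tm).
  rewrite /rimg !in_set0; apply.
  apply: nilp_rees; apply: NNPP; exact: Hnoedge.
- move: HC; rewrite !negb_or => /and3P [aI bI cI].
  have toY : forall g, gen op (pair2 x y) g -> g \notin I -> gen op (fun u => u = y) g.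
    move=> g; elim=> [u [->|->]|u v _ IHu _ IHv] HnI.
    - by rewrite xI in HnI.
    - by apply: gen_base.
    - apply: gen_mul; [apply: IHu | apply: IHv]; apply/negP => H; move/negP: HnI; apply.
      + exact: (idl _ _ H).1.
      + exact: (idl _ _ H).2.
  have commy : forall u, gen op (fun u => u = y) u -> op u y = op y u.
    move=> u; elim=> [u0 ->|u1 u2 _ IH1 _ IH2] //.
    by rewrite -(Hassoc u1 u2 y) IH2 (Hassoc u1 y u2) IH1 -(Hassoc y u1 u2).
  have comm : forall u v, gen op (fun u => u = y) u -> gen op (fun u => u = y) v -> op u v = op v u.
    move=> u v Gu; elim=> [v0 ->|v1 v2 _ IH1 _ IH2]; first by rewrite commy.
    by rewrite (Hassoc u v1 v2) IH1 -(Hassoc v1 u v2) IH2 (Hassoc v1 v2 u).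
  have Ya := toY a Ga aI; have Yb := toY b Gb bI.
  have E1 : (lamrho op a b z 1).1 = (lamrho op a b z 1).2.
    have := Gz 1; move: cI => /=; case: (z 1) => [c|] /= cI Gc.
      have Yc := toY c Gc cI.
      by rewrite (comm _ _ (gen_mul Ya Yc) Yb) (comm _ _ Ya Yc) Hassoc.
    exact: comm.
  have m0 : 0 < m by apply: leq_ltn_trans tm.
  have := @lr_stable _ op a b z 1 m.-1 E1; rewrite add1n prednK // -Etm.
  exact: neq t (leq_trans (ltnW tm) (leqW mN)).
Qed.
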